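(* Let $n\neq 0,-1$ be an integer and let $K_n$ be the $n$-twist knot with exterior $E_{K_n}$, meridian $m$ and preferred longitude $\ell$. Then every irreducible metabelian representation $\rho:\pi_1(E_{K_n})\to SL(2,\mathbb{C})$ satisfies $\rho(m^4\ell)=\mathbf{1}$; that is, every irreducible metabelian $SL(2,\mathbb{C})$-representation of $\pi_1(E_{K_n})$ lies in $R(M)$, where $M$ is the manifold obtained by $4$-surgery along $K_n$.
   Context: For a knot $K\subset S^3$, $E_K$ denotes its exterior (the complement of an open tubular neighbourhood). The $n$-twist knot $K_n$ is the two-bridge knot whose group has the presentation $\pi_1(E_{K_n})=\langle \alpha,\beta\mid \omega^n\alpha=\beta\omega^n\rangle$ with $\alpha,\beta$ meridians and $\omega=\beta\alpha^{-1}\beta^{-1}\alpha$; its Alexander polynomial is $-nt^2+(2n+1)t-n$, and $K_1$ is the figure-eight knot. $M$ is obtained by $4$-surgery along $K_n$, so $\pi_1(M)\cong\pi_1(E_{K_n})/\langle\!\langle m^4\ell\rangle\!\rangle$. For a space $X$, $R(X)$ denotes the set of homomorphisms $\pi_1(X)\to SL(2,\mathbb{C})$; via pull-back along the quotient map, $R(M)$ is identified with $\{\rho\in R(E_{K_n})\mid \rho(m^4\ell)=\mathbf{1}\}$. A representation is irreducible if the only subspaces of $\mathbb{C}^2$ invariant under its image are $\{0\}$ and $\mathbb{C}^2$; it is metabelian if the image of the commutator subgroup is abelian. *)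

(* Defs.v *)
From HB Require Import structures.
From mathcomp Require Import all_boot all_order all_algebra.
From mathcomp Require Import complex.
From mathcomp Require Import Rstruct.
From Stdlib Require Import Rdefinitions.
Set Implicit Arguments. Unset Strict Implicit. Unset Printing Implicit Defensive.
Import Order.TTheory GRing.Theory Num.Theory.
Local Open Scope ring_scope.
Local Open Scope complex_scope.

Notation CC := ((Rdefinitions.R)[i]).

Notation mat2 := ('M[CC]_2).

Definition inSL2 (X : mat2) : Prop := \det X = 1.

(* omega = beta alpha^-1 beta^-1 alpha, evaluated at rho(alpha)=A, rho(beta)=B *)
Definition omega (A B : mat2) : mat2 := B * A^-1 * B^-1 * A.

Definition omega_rev (A B : mat2) : mat2 := A * B^-1 * A^-1 * B.

Definition longitude (n : int) (A B : mat2) : mat2 :=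
  (omega_rev A B) ^ n * (omega A B) ^ n.

(* rho : pi_1(E_{K_n}) -> SL(2,C), given by the images A, B of the meridian
   generators alpha, beta, satisfying the defining relation. *)
Definition twist_rep (n : int) (A B : mat2) : Prop :=
  [/\ inSL2 A, inSL2 B & (omega A B) ^ n * A = B * (omega A B) ^ n].

Inductive gen_grp (S : mat2 -> Prop) : mat2 -> Prop :=
  | gen_in  : forall x, S x -> gen_grp S x
  | gen_one : gen_grp S 1
  | gen_mul : forall x y, gen_grp S x -> gen_grp S y -> gen_grp S (x * y)
  | gen_inv : forall x, gen_grp S x -> gen_grp S x^-1.

Definition image_grp (A B : mat2) : mat2 -> Prop :=
  gen_grp (fun X => X = A \/ X = B).

Definition image_commutator (A B : mat2) : mat2 -> Prop :=
  gen_grp (fun X => exists g h, image_grp A B g /\ image_grp A B h /\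
                                X = g^-1 * h^-1 * g * h).

Definition metabelian (A B : mat2) : Prop :=
  forall x y, image_commutator A B x -> image_commutator A B y -> x * y = y * x.

Definition subspace (V : 'cV[CC]_2 -> Prop) : Prop :=
  [/\ V 0, (forall u v, V u -> V v -> V (u + v)) &
      (forall (c : CC) v, V v -> V (c *: v))].

Definition invariant (X : mat2) (V : 'cV[CC]_2 -> Prop) : Prop :=
  forall v, V v -> V (X *m v).

Definition irreducible (A B : mat2) : Prop :=
  forall V, subspace V ->
    (forall X, image_grp A B X -> invariant X V) ->
    (forall v, V v <-> v = 0) \/ (forall v, V v).

(* Main.v *)
Require Import Defs.
From HB Require Import structures.
From mathcomp Require Import all_boot all_order all_algebra.
From mathcomp Require Import complex Rstruct.
From mathcomp Require Import ring.
Import GRing.Theory.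
Local Open Scope ring_scope.

Definition mk (a b c d : CC) : mat2 :=
  \matrix_(i, j) if i == 0 then (if j == 0 then a else b)
                 else (if j == 0 then c else d).

Lemma ord2P (i : 'I_2) : i = 0 \/ i = 1.
Proof. case: i => [[|[|k]] Hi]; [left|right|by []]; exact: val_inj. Qed.

Lemma mkE (M : mat2) : M = mk (M 0 0) (M 0 1) (M 1 0) (M 1 1).
Proof.
apply/matrixP => i j; rewrite mxE.
by case: (ord2P i) => ->; case: (ord2P j) => ->.
Qed.

Lemma mk_inj a b c d a' b' c' d' :
  mk a b c d = mk a' b' c' d' -> [/\ a = a', b = b', c = c' & d = d'].
Proof.
move=> /matrixP H.
by split; [move: (H 0 0) | move: (H 0 1) | move: (H 1 0) | move: (H 1 1)]; rewrite !mxE.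
Qed.

Lemma mk_eq a b c d a' b' c' d' :
  a = a' -> b = b' -> c = c' -> d = d' -> mk a b c d = mk a' b' c' d'.
Proof. by move=> -> -> -> ->. Qed.

Lemma mk_mul a b c d e f g h :
  mk a b c d * mk e f g h = mk (a*e + b*g) (a*f + b*h) (c*e + d*g) (c*f+d*h).
Proof.
apply/matrixP => i j; rewrite !mxE !big_ord_recl big_ord0 !mxE.
by case: (ord2P i) => ->; case: (ord2P j) => -> /=; rewrite addr0.
Qed.

Lemma mk_mulmx a b c d e f g h :
  mk a b c d *m mk e f g h = mk (a*e + b*g) (a*f + b*h) (c*e + d*g) (c*f+d*h).
Proof. exact: mk_mul. Qed.

Lemma mk_add a b c d e f g h :
  mk a b c d + mk e f g h = mk (a+e) (b+f) (c+g) (d+h).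
Proof.
apply/matrixP => i j; rewrite !mxE.
by case: (ord2P i) => ->; case: (ord2P j) => ->.
Qed.

Lemma mk_opp a b c d : - mk a b c d = mk (-a) (-b) (-c) (-d).
Proof.
apply/matrixP => i j; rewrite !mxE.
by case: (ord2P i) => ->; case: (ord2P j) => ->.
Qed.

Lemma mk_scale k a b c d : k *: mk a b c d = mk (k*a) (k*b) (k*c) (k*d).
Proof.
apply/matrixP => i j; rewrite !mxE.
by case: (ord2P i) => ->; case: (ord2P j) => ->.
Qed.

Lemma mk_scalar k : k%:M = mk k 0 0 k :> mat2.
Proof.
apply/matrixP => i j; rewrite !mxE.
by case: (ord2P i) => ->; case: (ord2P j) => ->.
Qed.

Lemma mk_one : 1 = mk 1 0 0 1 :> mat2.
Proof. exact: mk_scalar. Qed.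

Lemma mk_zero : 0 = mk 0 0 0 0 :> mat2.
Proof.
apply/matrixP => i j; rewrite !mxE.
by case: (ord2P i) => ->; case: (ord2P j) => ->.
Qed.

Lemma mk_det a b c d : \det (mk a b c d) = a * d - b * c.
Proof.
rewrite (expand_det_row _ 0) !big_ord_recl big_ord0 /cofactor !det_mx11 !mxE /=.
have l1 : lift ord0 ord0 = (1 : 'I_2) by exact: val_inj.
rewrite /bump /= expr0 expr1. ring.
Qed.

Lemma mk_tr a b c d : \tr (mk a b c d) = a + d.
Proof. by rewrite /mxtrace !big_ord_recl big_ord0 !mxE /= addr0. Qed.

Lemma mk_adj a b c d : \adj (mk a b c d) = mk d (-b) (-c) a.
Proof.
apply/matrixP => i j; rewrite !mxE /cofactor det_mx11 !mxE.
case: (ord2P i) => ->; case: (ord2P j) => -> /=;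
  rewrite /bump /= ?expr0 ?expr1 ?expr2; ring.
Qed.


Lemma mk_ind (P : mat2 -> Prop) : (forall a b c d, P (mk a b c d)) -> forall X, P X.
Proof. by move=> h X; rewrite (mkE X). Qed.

Lemma unit_det1 (M : mat2) : \det M = 1 -> M \is a GRing.unit.
Proof. by move=> h; rewrite unitmxE; rewrite h unitr1. Qed.

Lemma inv_det1 (M : mat2) : \det M = 1 -> M^-1 = \adj M.
Proof.
move=> h; have hu := unit_det1 M h.
apply: (mulrI hu); rewrite mulrV // -mulmxE mul_mx_adj h.
by [].
Qed.

Lemma det_mul (X Y : mat2) : \det (X * Y) = \det X * \det Y.
Proof. by rewrite -mulmxE det_mulmx. Qed.

Lemma det_inv1 (X : mat2) : \det X = 1 -> \det X^-1 = 1.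
Proof.
move=> h; rewrite inv_det1 // -[RHS]h; elim/mk_ind: X {h} => a b c d.
rewrite mk_adj !mk_det; ring.
Qed.

Lemma adj_tr (X : mat2) : \adj X = \tr X *: 1 - X.
Proof.
elim/mk_ind: X => a b c d.
rewrite mk_adj mk_tr mk_one mk_scale mk_opp mk_add.
apply: mk_eq; ring.
Qed.

Lemma cayley (X : mat2) : X * X = \tr X *: X - (\det X)%:M.
Proof.
elim/mk_ind: X => a b c d.
rewrite mk_mul mk_tr mk_det mk_scalar mk_scale mk_opp mk_add.
apply: mk_eq; ring.
Qed.

Definition mkv (x y : CC) : 'cV[CC]_2 := \matrix_(i, j) if i == 0 then x else y.

Lemma mk_mulv a b c d x y : mk a b c d *m mkv x y = mkv (a*x+b*y) (c*x+d*y).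
Proof.
apply/matrixP => i j; rewrite !mxE !big_ord_recl big_ord0 !mxE.
by case: (ord2P i) => -> /=; rewrite addr0.
Qed.

Lemma mkv_eq0 x y : mkv x y = 0 -> x = 0 /\ y = 0.
Proof.
move=> /matrixP H; split; [move: (H 0 0) | move: (H 1 0)]; by rewrite !mxE.
Qed.

Lemma red (A B M : mat2) : \det A = 1 -> \det B = 1 -> M != 0 -> \det M = 0 ->
  (forall v : 'cV[CC]_2, M *m v = 0 -> M *m (A *m v) = 0) ->
  (forall v : 'cV[CC]_2, M *m v = 0 -> M *m (B *m v) = 0) -> ~ irreducible A B.
Proof.
move=> hA hB; elim/mk_ind: M => a b c d hM0 hMd iA iB hirr.
rewrite mk_det in hMd.
pose V := fun v : 'cV[CC]_2 => mk a b c d *m v = 0.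
have sV : subspace V.
  split; rewrite /V; first by rewrite mulmx0.
    by move=> u v hu hv; rewrite mulmxDr hu hv addr0.
  by move=> k v hv; rewrite -scalemxAr hv scaler0.
have key : forall X, image_grp A B X -> \det X = 1 /\ forall v, V v -> V (X *m v).
  move=> X; elim => {X}.
  - by move=> x [->|->]; split.
  - split; first by rewrite det1. by move=> v; rewrite mul1mx.
  - move=> x y _ [dx ix] _ [dy iy]; split; first by rewrite det_mul dx dy mulr1.
    move=> v hv; rewrite -mulmxE -mulmxA; apply: ix; exact: iy.
  - move=> x _ [dx ix]; split; first exact: det_inv1.
    move=> v hv; have := ix v hv; rewrite /V in hv * => hx.
    by rewrite inv_det1 // adj_tr mulmxBl -scalemxAl mul1mx mulmxBr -scalemxAr hv hx scaler0 subr0.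
have hinv : forall X, image_grp A B X -> Defs.invariant X V by move=> X hX; exact: (key X hX).2.
case: (hirr V sV hinv) => [h0|hall].
  have /h0 /mkv_eq0 [e1 e2] : V (mkv b (-a)).
    rewrite /V mk_mulv; apply/matrixP => i j; rewrite !mxE.
    case: (ord2P i) => -> /=; first by ring.
    transitivity (-(a*d - b*c)); [ring | by rewrite hMd oppr0].
  have /h0 /mkv_eq0 [e3 e4] : V (mkv d (-c)).
    rewrite /V mk_mulv; apply/matrixP => i j; rewrite !mxE.
    case: (ord2P i) => -> /=; last by ring.
    transitivity (a*d - b*c); [ring | by rewrite hMd].
  move: hM0; rewrite mk_zero; have -> : a = 0 by rewrite -[a]opprK e2 oppr0.
  have -> : c = 0 by rewrite -[c]opprK e4 oppr0.
  by rewrite e1 e3 eqxx.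
have := hall (mkv 1 0); rewrite /V mk_mulv => /mkv_eq0 [].
rewrite !mulr1 !mulr0 !addr0 => e1 e3.
have := hall (mkv 0 1); rewrite /V mk_mulv => /mkv_eq0 [].
rewrite !mulr1 !mulr0 !add0r => e2 e4.
by move: hM0; rewrite mk_zero e1 e2 e3 e4 eqxx.
Qed.

Lemma comm_inv (M X : mat2) : M * X = X * M ->
  forall v : 'cV[CC]_2, M *m v = 0 -> M *m (X *m v) = 0.
Proof.
move=> h v hv; rewrite mulmxA.
have -> : M *m X = X *m M by exact: h.
by rewrite -mulmxA hv mulmx0.
Qed.

Lemma scalC (X : mat2) k : k%:M * X = X * k%:M.
Proof. by rewrite -!mulmxE scalar_mxC. Qed.

Lemma eigen (X : mat2) : exists l, \det (X - l%:M) = 0.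
Proof.
have [l hl] := @solve_monicpoly CC 2 (fun i => if i == 0%N then - \det X else \tr X) isT.
rewrite !big_ord_recl big_ord0 /= in hl.
exists l; elim/mk_ind: X hl => a b c d.
rewrite mk_det mk_tr mk_scalar mk_opp mk_add mk_det => hl.
transitivity (l^+2 - (- (a * d - b * c) * l ^+ 0 + ((a + d) * l ^+ 1 + 0))).
  rewrite expr0 expr1 expr2; ring.
by rewrite hl subrr.
Qed.

Lemma tridentity (A B : mat2) : \tr A * \det (A*B - B*A) =
  \tr ((B * \adj A * (\adj A * B) - \adj A * B * (B * \adj A)) * A).
Proof.
elim/mk_ind: A => a b c d; elim/mk_ind: B => e f g h.
rewrite mk_adj !mk_mul !mk_opp !mk_add !mk_mul mk_tr mk_det mk_tr; ring.
Qed.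

Lemma polar (A B : mat2) :
  (A*B - B*A) * A = \tr A *: (A*B - B*A) - A * (A*B - B*A).
Proof.
elim/mk_ind: A => a b c d; elim/mk_ind: B => e f g h.
rewrite !mk_mul !mk_opp !mk_add !mk_mul mk_tr mk_scale !mk_opp !mk_add.
apply: mk_eq; ring.
Qed.

Lemma polarB (A B : mat2) :
  (A*B - B*A) * B = \tr B *: (A*B - B*A) - B * (A*B - B*A).
Proof.
elim/mk_ind: A => a b c d; elim/mk_ind: B => e f g h.
rewrite !mk_mul !mk_opp !mk_add !mk_mul mk_tr mk_scale !mk_opp !mk_add.
apply: mk_eq; ring.
Qed.

Lemma polar_inv (C X : mat2) : C * X = \tr X *: C - X * C ->
  forall v : 'cV[CC]_2, C *m v = 0 -> C *m (X *m v) = 0.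
Proof.
move=> h v hv; rewrite mulmxA.
have -> : C *m X = \tr X *: C - X *m C by exact: h.
by rewrite mulmxBl -scalemxAl -mulmxA hv mulmx0 scaler0 subr0.
Qed.

Lemma mk1000 : mk 1 0 0 0 != 0.
Proof. rewrite mk_zero; apply/eqP => /mk_inj [h _ _ _]; move: h; apply/eqP; exact: oner_neq0. Qed.

Theorem lemma2p12 (n : int) (hn0 : n != 0) (hn1 : n != -1) (A B : mat2)
    (hrho : twist_rep n A B) (hirr : irreducible A B) (hmet : metabelian A B) :
  A ^+ 4 * longitude n A B = 1.
Proof.
case: hrho => hA hB hrel; rewrite /inSL2 in hA hB.
have uA := unit_det1 A hA; have uB := unit_det1 B hB.
have dAi := det_inv1 A hA; have dBi := det_inv1 B hB.
rewrite /longitude.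
set w := Defs.omega A B in hrel *.
have hw : \det w = 1 by rewrite /w /Defs.omega !det_mul dAi dBi hA hB !mulr1.
have uw := unit_det1 w hw.
set x := w ^ n in hrel *.
have ux : x \is a GRing.unit := unitrXz n uw.
have gw : image_grp A B w.
  rewrite /w /Defs.omega; apply: gen_mul; last by apply: gen_in; left.
  apply: gen_mul; last by apply: gen_inv; apply: gen_in; right.
  by apply: gen_mul; [apply: gen_in; right | apply: gen_inv; apply: gen_in; left].
have gx : image_grp A B x.
  have gk : forall k : nat, image_grp A B (w ^+ k).
    elim=> [|k IH]; first by rewrite expr0; apply: gen_one.
    by rewrite exprS; apply: gen_mul.
  rewrite /x; case: n {hn0 hn1 x ux hrel} => k; first exact: gk.
  by apply: gen_inv; apply: gk.
have hB' : B = x * A * x^-1 by rewrite hrel mulrK.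
set p := A^-1 * B.
set q := B * A^-1.
have gp : image_commutator A B p.
  apply: gen_in; exists A, x^-1; split; first by apply: gen_in; left.
  split; first by apply: gen_inv.
  by rewrite /p invrK {1}hB' !mulrA.
have gq : image_commutator A B q.
  apply: gen_in; exists x^-1, A^-1; split; first by apply: gen_inv.
  split; first by apply: gen_inv; apply: gen_in; left.
  by rewrite /q !invrK {1}hB' ?mulrA.
have hpq := hmet p q gp gq.
have up : p \is a GRing.unit by rewrite unitrMr // unitrV.
have uq : q \is a GRing.unit by rewrite unitrMl // unitrV.
have ew : w = q * p^-1.
  by rewrite /w /Defs.omega /q /p invrM ?unitrV // invrK !mulrA.
have er : omega_rev A B = q^-1 * p.
  by rewrite /omega_rev /q /p invrM ?unitrV // invrK !mulrA.
have erw : omega_rev A B = w^-1.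
  have h1 : omega_rev A B * w = 1.
    by rewrite er ew -mulrA (mulrA p) hpq mulrK // mulVr.
  by rewrite -[omega_rev A B]mulr1 -(mulrV uw) mulrA h1 mul1r.
rewrite erw exprz_inv -invr_expz mulVr ?unitrXz // mulr1.
have htr0 : \tr A * \det (A*B - B*A) = 0.
  rewrite tridentity -!(inv_det1 A hA) -/p -/q hpq subrr mul0r.
  by rewrite ?mul0r mxtrace0.
have [htr|htr] := eqVneq (\tr A) 0.
  have hA2 : A * A = -1 by rewrite cayley htr scale0r hA sub0r.
  have -> : A ^+ 4 = (A * A) * (A * A) by rewrite !exprS expr0 mulr1 !mulrA.
  by rewrite hA2 mulrNN mulr1.
exfalso.
have hdet : \det (A*B - B*A) = 0.
  by move/eqP: htr0; rewrite mulf_eq0 (negbTE htr) /= => /eqP.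
have [hC|hC] := eqVneq (A*B - B*A) 0; last first.
  apply: (red _ _ _ hA hB hC hdet _ _ hirr).
    exact: polar_inv _ _ (polar A B).
  exact: polar_inv _ _ (polarB A B).
have hAB : A * B = B * A by exact: subr0_eq hC.
have [l hl] := eigen A.
have [hM|hM] := eqVneq (A - l%:M) 0; last first.
  apply: (red _ _ _ hA hB hM hl _ _ hirr); apply: comm_inv.
    by rewrite mulrBl mulrBr scalC.
  by rewrite mulrBl mulrBr hAB scalC.
have hAl : A = l%:M by exact: subr0_eq hM.
have [k hk] := eigen B.
have [hM'|hM'] := eqVneq (B - k%:M) 0; last first.
  apply: (red _ _ _ hA hB hM' hk _ _ hirr); apply: comm_inv.
    by rewrite hAl scalC.
  by rewrite mulrBl mulrBr scalC.
have hBk : B = k%:M by exact: subr0_eq hM'.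
have hd : \det (mk 1 0 0 0) = 0 by rewrite mk_det; ring.
apply: (red _ _ _ hA hB mk1000 hd _ _ hirr); apply: comm_inv.
  by rewrite hAl scalC.
by rewrite hBk scalC.
Qed.
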